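(* (a) Let $G$ be a finite abelian group of order coprime to $p$ and $\bar a=(a_1,\ldots,a_t)\in(\mathcal F(G,K))^t$. Then the space $\ker(\Delta_{\bar a})=\{f\in\mathcal F(G,K): f*a_j=0\ \forall j\}$ is spanned over $K$ by the translates of the traces $\mathrm{Tr}(g^\vee)$ of the $\bar a$-harmonic characters $g^\vee\in G^\vee$. (b) Let $\Lambda$ be a lattice, $\Lambda'\subseteq\Lambda$ a sublattice of finite index coprime to $p$, and $\bar a=(a_1,\ldots,a_t)\in(\mathcal F^0(\Lambda,K))^t$. Then the kernel of $\Delta_{\bar a}$ restricted to $\mathcal F_{\Lambda'}(\Lambda,K)$ is spanned over $K$ by the translates of the traces of the $\bar a$-harmonic characters $g^\vee\in\mathrm{Char}(\Lambda,\bar K^\times)$ with $\Lambda'\subseteq\ker(g^\vee)$.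
   Context: $K=\mathrm{GF}(q)$ with $q=p^r$, $\bar K$ an algebraic closure. For an abelian group $G$, $\mathcal F(G,F)$ and $\mathcal F^0(G,F)$ denote all, resp. finitely supported, functions $G\to F$; $(f*a)(g)=\sum_hf(h)a(g-h)$, $\Delta_af=f*a$, and $\ker\Delta_{\bar a}=\bigcap_j\ker\Delta_{a_j}$. Characters are homomorphisms $G\to\bar K^\times$ ($G^\vee$ for finite $G$, $\mathrm{Char}(\Lambda,\bar K^\times)$ for a lattice $\Lambda$); a character $g^\vee$ is $\bar a$-harmonic if $g^\vee*a_j=0$ for all $j$. For a function $f$ with finitely many values in $\bar K$, let $\mathrm{GF}(q^{r(f)})$ be the smallest subfield of $\bar K$ containing $K$ and all values of $f$, and $\mathrm{Tr}(f)=f+f^q+\cdots+f^{q^{r(f)-1}}$ (powers taken pointwise); it is $K$-valued. Translates of $h$ are the functions $x\mapsto h(x+g)$. $\mathcal F_{\Lambda'}(\Lambda,K)$ is the space of $K$-valued functions on $\Lambda$ invariant under translation by $\Lambda'$. *)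

(* Defs.v *)
From HB Require Import structures.
From mathcomp Require Import all_boot all_order all_algebra all_field.
From mathcomp Require Import finmap.
Set Implicit Arguments. Unset Strict Implicit. Unset Printing Implicit Defensive.
Import GRing.Theory.
Local Open Scope ring_scope.

(* A character of an abelian group D with values in L^x : a group
   homomorphism (D,+) -> (L^x, * ).  (chi 0 = 1 and multiplicativity force
   all values to be units.) *)
Definition is_char (D : zmodType) (L : fieldType) (chi : D -> L) : Prop :=
  chi 0 = 1 /\ forall x y, chi (x + y) = chi x * chi y.

Definition convG (G : finZmodType) (R : nzRingType) (f a : G -> R) (g : G) : R :=
  \sum_(h : G) f h * a (g - h).

(* Convolution with a finitely supported K-valued function a on an abelian
   group D, the values of a being pushed into R by phi:
   (f * a)(g) = sum_h f(h) a(g - h) = sum_(k in supp a) f(g - k) a(k). *)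
Definition convF (Dz : zmodType) (K : fieldType) (R : nzRingType)
  (phi : K -> R) (f : Dz -> R) (a : {fsfun Dz -> K with 0}) (g : Dz) : R :=
  (\sum_(k <- finsupp a) f (g - k) * phi (a k))%R.

Definition in_GF (L : fieldType) (q m : nat) (x : L) : bool := x ^+ (q ^ m) == x.

(* r(f): GF(q^r) is the smallest subfield of L containing K = GF(q) and
   all values of f, i.e. r is the least m >= 1 with all values in GF(q^m). *)
Definition is_rdeg (D : Type) (L : fieldType) (q : nat) (f : D -> L) (r : nat) : Prop :=
  (0 < r)%N /\ (forall x, in_GF q r (f x)) /\
  (forall m, (0 < m)%N -> (forall x, in_GF q m (f x)) -> (r <= m)%N).

Definition trace_fun (D : Type) (L : fieldType) (q r : nat) (f : D -> L) (x : D) : L :=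
  \sum_(i < r) f x ^+ (q ^ i).

Definition Kspan (D : Type) (K L : fieldType) (iota : K -> L)
  (P : (D -> L) -> Prop) (h : D -> L) : Prop :=
  exists (N : nat) (c : 'I_N -> K) (v : 'I_N -> D -> L),
    (forall i, P (v i)) /\ forall x, h x = \sum_(i < N) iota (c i) * v i x.

Definition trace_translates (D : zmodType) (L : fieldType) (q : nat)
  (H : (D -> L) -> Prop) (v : D -> L) : Prop :=
  exists (chi : D -> L) (r : nat) (g : D),
    is_char chi /\ H chi /\ is_rdeg q chi r /\
    forall x, v x = trace_fun q r chi (x + g).

Definition is_subgroup (D : zmodType) (S : D -> Prop) : Prop :=
  S 0 /\ forall x y, S x -> S y -> S (x - y).

Definition has_index (D : zmodType) (S : D -> Prop) (m : nat) : Prop :=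
  exists s : 'I_m -> D,
    (forall x, exists i, S (x - s i)) /\
    (forall i j, S (s i - s j) -> i = j).

(* Main.v *)
Require Import Defs.
From HB Require Import structures.
From mathcomp Require Import all_boot all_order all_algebra all_field.
From mathcomp Require Import finmap.
From mathcomp Require Import all_fingroup all_solvable.
From Stdlib Require Import IndefiniteDescription Classical.
Set Implicit Arguments. Unset Strict Implicit. Unset Printing Implicit Defensive.
Import GRing.Theory.
Local Open Scope ring_scope.


Section Frob.
Variables (K : finFieldType) (p : nat) (Hp : p \in [pchar K]) (L : closedFieldType)
  (iota : {rmorphism K -> L}).
Local Notation q := #|K|.

Lemma qpnat : p.-nat q.
Proof. by have := pprimeChar_pgroup Hp; rewrite /pgroup cardsT. Qed.

Lemma pcharL : p \in [pchar L].
Proof. exact: rmorph_pchar Hp. Qed.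

Lemma qlnat l : [pchar L].-nat (q ^ l)%N.
Proof.
apply: (@sub_in_pnat p); last by rewrite pnatX qpnat.
by move=> r _; rewrite inE => /eqP ->; exact: pcharL.
Qed.

Lemma frobD l (x y : L) : (x + y) ^+ (q ^ l)%N = x ^+ (q ^ l)%N + y ^+ (q ^ l)%N.
Proof. exact: exprDn_pchar (qlnat l). Qed.

Lemma q_gt0 : (0 < q)%N.
Proof. by apply/card_gt0P; exists 0. Qed.

Lemma frob0 l : (0 : L) ^+ (q ^ l)%N = 0.
Proof. by rewrite expr0n expn_eq0 (negbTE (lt0n_neq0 q_gt0)) andFb. Qed.

Lemma frob_sum l (I : Type) (r : seq I) (P : pred I) (F : I -> L) :
  (\sum_(i <- r | P i) F i) ^+ (q ^ l)%N = \sum_(i <- r | P i) F i ^+ (q ^ l)%N.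
Proof. by apply: (big_morph (fun x : L => x ^+ (q ^ l)%N)); [exact: frobD|exact: frob0]. Qed.

Lemma frobN l (x : L) : (- x) ^+ (q ^ l)%N = - x ^+ (q ^ l)%N.
Proof.
apply/eqP; rewrite -subr_eq0 opprK -frobD addNr frob0 //.
Qed.

Lemma frobB l (x y : L) : (x - y) ^+ (q ^ l)%N = x ^+ (q ^ l)%N - y ^+ (q ^ l)%N.
Proof. by rewrite frobD frobN. Qed.

Lemma frobK l (k : K) : k ^+ (q ^ l)%N = k.
Proof.
elim: l => [|l IH]; first by rewrite expn0 expr1.
by rewrite expnSr exprM IH expf_card.
Qed.

Lemma iotaq l (k : K) : iota k ^+ (q ^ l)%N = iota k.
Proof. by rewrite -rmorphXn frobK. Qed.

Lemma frob_inj l : injective (fun x : L => x ^+ (q ^ l)%N).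
Proof.
move=> x y /= /eqP; rewrite -subr_eq0 -frobB expf_eq0 subr_eq0 => /andP[_ /eqP] //.
Qed.

Lemma fixed_iota (x : L) : x ^+ q = x -> exists k, iota k = x.
Proof.
move=> hx.
have := congr1 (map_poly iota) (finField_genPoly K).
rewrite rmorphB /= map_polyXn map_polyX rmorph_prod /=.
under eq_bigr do rewrite map_polyXsubC.
move=> E.
have : root ('X^q - 'X : {poly L}) x by rewrite rootE !hornerE hx subrr.
rewrite E -big_enum /= -(big_map iota xpredT (fun z => 'X - z%:P)) root_prod_XsubC.
by case/mapP => k _ ->; exists k.
Qed.

End Frob.


Lemma roots_exist (L : closedFieldType) (m : nat) : (0 < m)%N -> m%:R != 0 :> L ->
  exists rs : seq L, [/\ uniq rs, size rs = m & forall z, (z \in rs) = (z ^+ m == 1)].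
Proof.
move=> m0 mn0.
set P : {poly L} := 'X^m - 1.
have monP : P \is monic by rewrite monicXnsubC.
have [rs Hrs] := closed_field_poly_normal P.
rewrite (monicP monP) scale1r in Hrs.
exists rs; split.
- rewrite -separable_prod_XsubC -Hrs; rewrite unlock /separable_poly.
  apply/Bezout_eq1_coprimepP.
  exists (-1, (m%:R)^-1 *: 'X).
  rewrite /P derivB derivXn derivC subr0 /=.
  rewrite mulrnAr -scalerAl -exprS prednK // scalerMnl -mulr_natr mulVf // scale1r mulN1r opprB subrK //.
- have H1 := size_prod_XsubC rs id.
  have H2 : size P = m.+1 by rewrite /P size_XnsubC.
  rewrite -Hrs H2 in H1.
  by move/eqP: H1; rewrite eqSS eq_sym => /eqP.
- move=> z; rewrite -root_prod_XsubC -Hrs /P rootE !hornerE subr_eq0 //.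
Qed.

Lemma roots_sum (F : fieldType) (rs : seq F) (m k : nat) :
  uniq rs -> size rs = m -> (forall z, (z \in rs) = (z ^+ m == 1)) ->
  (0 < k)%N -> (k < m)%N -> \sum_(z <- rs) (z ^+ k)^-1 = 0.
Proof.
move=> Urs Srs Hrs k0 km.
set Sm := \sum_(z <- rs) _.
have nz z : z \in rs -> z != 0.
  rewrite Hrs => /eqP hz; apply/eqP => z0; move: hz; rewrite z0 expr0n.
  have -> : (m == 0%N) = false by case: (m) km.
  by move/eqP; rewrite eq_sym oner_eq0.
have inv z0 : z0 \in rs -> (z0 ^+ k)^-1 * Sm = Sm.
  move=> hz0.
  have Um : uniq (map (fun z => z0 * z) rs) by rewrite map_inj_uniq //; apply: mulfI; exact: nz.
  have sub : {subset map (fun z => z0 * z) rs <= rs}.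
    move=> y /mapP [z hz ->]; rewrite Hrs exprMn.
    by move: hz hz0; rewrite !Hrs => /eqP -> /eqP ->; rewrite mulr1.
  have [_ eqs] := uniq_min_size Um sub (eq_leq (esym (size_map _ _))).
  have pe := uniq_perm Um Urs eqs.
  rewrite {2}/Sm -(perm_big _ pe) /= big_map /Sm mulr_sumr.
  by apply: eq_bigr => z _; rewrite exprMn invfM.
apply/eqP; apply/negPn/negP => Sn0.
have all1 : all (root ('X^k - 1)) rs.
  apply/allP => z hz; rewrite rootE !hornerE subr_eq0 //.
  have := inv z hz; move/(congr1 (fun x => x / Sm)); rewrite -mulrA divff // mulr1.
  by move/eqP; rewrite invr_eq1.
have nz0 : ('X^k - 1 : {poly F}) != 0 by rewrite -size_poly_eq0 size_XnsubC.
have := max_poly_roots nz0 all1 Urs.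
by rewrite size_XnsubC // Srs ltnS leqNgt km.
Qed.


Section Grp.
Variables (D : zmodType) (S : D -> Prop) (HS : is_subgroup S) (m : nat) (s : 'I_m -> D)
  (Hs1 : forall x, exists i, S (x - s i)) (Hs2 : forall i j, S (s i - s j) -> i = j).

Lemma S0 : S 0. Proof. by case: HS. Qed.
Lemma SB x y : S x -> S y -> S (x - y). Proof. by case: HS => _; apply. Qed.
Lemma SN x : S x -> S (- x). Proof. by move=> h; rewrite -sub0r; apply: SB => //; exact: S0. Qed.
Lemma SD x y : S x -> S y -> S (x + y).
Proof. by move=> hx hy; rewrite -(opprK y); apply: SB => //; exact: SN. Qed.
Lemma Ssum (I : Type) (r : seq I) (F : I -> D) : (forall i, S (F i)) -> S (\sum_(i <- r) F i).
Proof.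
move=> h; elim: r => [|a r IH]; first by rewrite big_nil; exact: S0.
by rewrite big_cons; apply: SD.
Qed.

Definition idx (x : D) : 'I_m := proj1_sig (constructive_indefinite_description _ (Hs1 x)).
Lemma idxP x : S (x - s (idx x)).
Proof. exact: proj2_sig (constructive_indefinite_description _ (Hs1 x)). Qed.

Lemma m_gt0 : (0 < m)%N.
Proof. by have [i _] := Hs1 0; case: m i => [[]|]. Qed.

Section Shift.
Variable g : D.
Definition sig_g (j : 'I_m) : 'I_m := idx (s j + g).
Lemma sig_gP j : S (s j + g - s (sig_g j)). Proof. exact: idxP. Qed.
Lemma sig_g_inj : injective sig_g.
Proof.
move=> i j e; apply: Hs2.
have := SB (sig_gP i) (sig_gP j); rewrite e.
by rewrite opprB addrA subrK [s j + g]addrC addrKA.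
Qed.

End Shift.

Lemma sum_shift (R : zmodType) (F : D -> R) g :
  (forall x l, S l -> F (x + l) = F x) ->
  \sum_(j < m) F (s j + g) = \sum_(j < m) F (s j).
Proof.
move=> per.
transitivity (\sum_(j < m) F (s (sig_g g j))).
  apply: eq_bigr => j _.
  by rewrite -{1}(subrK (s (sig_g g j)) (s j + g)) addrC per //; exact: sig_gP.
by rewrite [RHS](reindex_inj (@sig_g_inj g)).
Qed.

Lemma mS g : S (g *+ m).
Proof.
have := @Ssum _ (index_enum 'I_m) (fun j => s j + g - s (sig_g g j)) (@sig_gP g).
have e : \sum_(j < m) s (sig_g g j) = \sum_(j < m) s j.
  by rewrite [RHS](reindex_inj (@sig_g_inj g)).
rewrite sumrB big_split /= sumr_const card_ord e.
by rewrite addrAC subrr add0r.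
Qed.

End Grp.

Lemma shift_sum (R : fieldType) (n : nat) (z : R) (G : nat -> R) :
  z ^+ n = 1 -> (0 < n)%N -> G n = G 0 ->
  \sum_(k < n) (z ^+ k)^-1 * G k.+1 = z * \sum_(k < n) (z ^+ k)^-1 * G k.
Proof.
case: n => // n zn _ Gn.
have z0 : z != 0 by apply/eqP => z0; move: zn; rewrite z0 expr0n /= => /eqP; rewrite eq_sym oner_eq0.
rewrite big_ord_recr big_ord_recl /= mulrDr mulr_sumr expr0 invr1 mul1r Gn addrC.
congr (_ + _).
  congr (_ * _); apply: (mulIf (expf_neq0 n z0)).
  by rewrite mulVf ?expf_neq0 // -exprS zn.
apply: eq_bigr => i _; rewrite /bump /= add1n mulrA exprS invfM mulrA divff // mul1r //.
Qed.

Lemma cyc_sum (R : zmodType) (n : nat) (a : nat -> R) :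
  a n = a 0 -> \sum_(i < n) a i.+1 = \sum_(i < n) a i.
Proof.
case: n => [|n] an; first by rewrite !big_ord0.
rewrite big_ord_recr big_ord_recl /= an addrC; congr (_ + _).
Qed.

Fixpoint Pall (T : Type) (P : T -> Prop) (s : seq T) : Prop :=
  if s is x :: s' then P x /\ Pall P s' else True.

Lemma Pall_map_in (T : eqType) (U : Type) (P : U -> Prop) (f : T -> U) (s : seq T) :
  (forall x, x \in s -> P (f x)) -> Pall P (map f s).
Proof.
elim: s => //= a s IH H; split; first by apply: H; rewrite inE eqxx.
by apply: IH => x xs; apply: H; rewrite inE xs orbT.
Qed.

Lemma Pall_map (T U : Type) (P : U -> Prop) (Q : T -> Prop) (f : T -> U) (s : seq T) :
  (forall x, Q x -> P (f x)) -> Pall Q s -> Pall P (map f s).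
Proof. by move=> H; elim: s => //= a s IH [qa qs]; split; [apply: H|apply: IH]. Qed.

Lemma Pall_concat (X : Type) (R : zmodType) (P1 P2 : (X -> R) -> Prop) (Fs : seq (X -> R)) :
  Pall P1 Fs ->
  (forall F, P1 F -> exists Gs, (forall x, F x = \sum_(G <- Gs) G x) /\ Pall P2 Gs) ->
  exists Gs, (forall x, \sum_(F <- Fs) F x = \sum_(G <- Gs) G x) /\ Pall P2 Gs.
Proof.
move=> + H; elim: Fs => [|F Fs IH] /=.
  by move=> _; exists [::]; split.
move=> [pF pFs]; have [Gs1 [e1 a1]] := H F pF; have [Gs2 [e2 a2]] := IH pFs.
exists (Gs1 ++ Gs2); split; first by move=> x; rewrite big_cons big_cat e1 e2.
elim: Gs1 {e1} a1 => //= G Gs1 IH1 [pG pGs]; split => //; exact: IH1.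
Qed.

Lemma ex_min (P : nat -> Prop) : (exists n, P n) -> exists k, P k /\ forall j, P j -> (k <= j)%N.
Proof.
move=> [n Pn]; elim: n {-2}n (leqnn n) Pn => [|N IH] n le Pn.
  by exists n; split => // j _; move: le; rewrite leqn0 => /eqP ->.
case: (classic (exists j, (j < n)%N /\ P j)) => [[j [jn Pj]]|nj].
  by apply: (IH j) => //; rewrite -ltnS (leq_trans jn le).
exists n; split => // j Pj; rewrite leqNgt; apply/negP => jn; apply: nj; by exists j.
Qed.

Lemma split_l (a b : nat) (i : 'I_a) : split (lshift b i) = inl i.
Proof. exact: (unsplitK (inl i)). Qed.
Lemma split_r (a b : nat) (i : 'I_b) : split (rshift a i) = inr i.
Proof. exact: (unsplitK (inr i)). Qed.

Lemma Kspan_ext (X : Type) (K : fieldType) (L : fieldType) (iota : K -> L) P (h h' : X -> L) :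
  (forall x, h x = h' x) -> Kspan iota P h' -> Kspan iota P h.
Proof.
move=> e [N [c [v [Pv ev]]]]; exists N, c, v; split => // x; by rewrite e ev.
Qed.

Lemma Kspan_add (X : Type) (K : fieldType) (L : fieldType) (iota : K -> L) P (h1 h2 : X -> L) :
  Kspan iota P h1 -> Kspan iota P h2 -> Kspan iota P (fun x => h1 x + h2 x).
Proof.
move=> [N1 [c1 [v1 [P1 e1]]]] [N2 [c2 [v2 [P2 e2]]]].
exists (N1 + N2)%N, (fun i => match split i with inl a => c1 a | inr b => c2 b end),
  (fun i => match split i with inl a => v1 a | inr b => v2 b end); split.
  by move=> i; case: (split i).
move=> x; rewrite big_split_ord /= e1 e2; congr (_ + _); apply: eq_bigr => i _.
  by rewrite split_l.
by rewrite split_r.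
Qed.

Lemma Kspan0 (X : Type) (K : fieldType) (L : fieldType) (iota : K -> L) P (h : X -> L) :
  (forall x, h x = 0) -> Kspan iota P h.
Proof.
move=> e; exists 0%N, (fun _ => 0), (fun _ _ => 0); split; first by case.
by move=> x; rewrite big_ord0 e.
Qed.

Section Main.
Variables (K : finFieldType) (p : nat) (Hp : p \in [pchar K]) (L : closedFieldType)
  (iota : {rmorphism K -> L}).
Variables (D : zmodType) (S : D -> Prop) (HS : is_subgroup S) (m : nat) (s : 'I_m -> D)
  (Hs1 : forall x, exists i, S (x - s i)) (Hs2 : forall i j, S (s i - s j) -> i = j)
  (Hmp : coprime m p).
Variables (rs : seq L) (Urs : uniq rs) (Srs : size rs = m)
  (Hrs : forall z, (z \in rs) = (z ^+ m == 1)).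
Variables (t : nat) (A : 'I_t -> seq (D * K)).
Local Notation q := #|K|.

Definition per (h : D -> L) := forall x l, S l -> h (x + l) = h x.
Definition cv (h : D -> L) (B : seq (D * K)) x := \sum_(kc <- B) h (x - kc.1) * iota kc.2.
Definition harm (h : D -> L) := forall j x, cv h (A j) x = 0.

Let mgt0 : (0 < m)%N := m_gt0 Hs1.

Lemma mL : m%:R != 0 :> L.
Proof.
rewrite -(dvdn_pcharf (pcharL Hp iota)) -prime_coprime ?(pcharf_prime Hp) //.
by rewrite coprime_sym.
Qed.

Lemma rs_nz z : z \in rs -> z != 0.
Proof.
rewrite Hrs => /eqP hz; apply/eqP => z0; move: hz; rewrite z0 expr0n.
by rewrite (negbTE (lt0n_neq0 mgt0)) => /eqP; rewrite eq_sym oner_eq0.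
Qed.

Definition Pj (g : D) (z : L) (F : D -> L) (x : D) : L :=
  (m%:R)^-1 * \sum_(k < m) (z ^+ k)^-1 * F (x + g *+ k).

Lemma Pj_sum g F x : \sum_(z <- rs) Pj g z F x = F x.
Proof.
rewrite /Pj -mulr_sumr exchange_big /=.
under eq_bigr do rewrite -mulr_suml.
rewrite -(big_mkord xpredT (fun k => (\sum_(z <- rs) (z ^+ k)^-1) * F (x + g *+ k))).
rewrite big_ltn // big_nat_cond [X in _ + X]big1; last first.
  move=> k /andP[/andP[k1 km] _].
  by rewrite (roots_sum Urs Srs Hrs k1 km) mul0r.
have e1 : forall r : seq L, \sum_(z <- r) (z ^+ 0)^-1 = (size r)%:R.
  elim=> [|a r IH]; first by rewrite big_nil.
  by rewrite big_cons IH expr0 invr1 /= -add1n natrD.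
by rewrite e1 Srs addr0 mulr0n addr0 mulKf ?mL.
Qed.

Lemma Pj_eig g z F : z \in rs -> per F -> forall x, Pj g z F (x + g) = z * Pj g z F x.
Proof.
move=> zr pF x; rewrite /Pj mulrCA; congr (_ * _).
have zm : z ^+ m = 1 by apply/eqP; rewrite -Hrs.
rewrite -(@shift_sum L m z (fun k => F (x + g *+ k)) zm mgt0).
  by apply: eq_bigr => k _; rewrite mulrS addrA.
by rewrite mulr0n addr0 pF //; exact: mS.
Qed.

Lemma Pj_shift g z F h la : (forall y, F (y + h) = la * F y) ->
  forall x, Pj g z F (x + h) = la * Pj g z F x.
Proof.
move=> eF x; rewrite /Pj [RHS]mulrCA [in RHS]mulr_sumr; congr (_ * _); apply: eq_bigr => k _.
by rewrite addrAC eF mulrCA.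
Qed.

Lemma Pj_per g z F : per F -> per (Pj g z F).
Proof.
move=> pF x l Sl; rewrite (@Pj_shift g z F l 1) ?mul1r // => y.
by rewrite mul1r pF.
Qed.

Lemma Pj_cv g z F B x : cv (Pj g z F) B x = Pj g z (fun y => cv F B y) x.
Proof.
rewrite /cv /Pj.
under eq_bigr do rewrite -mulrA mulr_suml mulr_sumr.
rewrite exchange_big /= mulr_sumr; apply: eq_bigr => k _.
rewrite mulr_sumr mulr_sumr; apply: eq_bigr => kc _.
by rewrite addrAC !mulrA.
Qed.

Lemma Pj_harm g z F : harm F -> harm (Pj g z F).
Proof.
move=> hF j x; rewrite Pj_cv /Pj big1 ?mulr0 // => k _.
by rewrite hF mulr0.
Qed.

Definition eig (F : D -> L) (g : D) := exists la, forall x, F (x + g) = la * F x.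
Definition good (gs : seq D) (F : D -> L) :=
  per F /\ harm F /\ forall g, g \in gs -> eig F g.

Lemma decomp (gs : seq D) (h : D -> L) : per h -> harm h ->
  exists Fs, (forall x, h x = \sum_(F <- Fs) F x) /\ Pall (good gs) Fs.
Proof.
move=> ph hh; elim: gs => [|g gs [Fs [eFs aFs]]].
  exists [:: h]; split; first by move=> x; rewrite big_seq1.
  by split.
suff H : forall F, good gs F -> exists Gs, (forall x, F x = \sum_(G <- Gs) G x) /\ Pall (good (g :: gs)) Gs.
  have [Gs [eGs aGs]] := Pall_concat aFs H.
  by exists Gs; split => // x; rewrite eFs eGs.
move=> F [pF [hF eF]]; exists (map (fun z => Pj g z F) rs); split.
  by move=> x; rewrite big_map Pj_sum.
apply: Pall_map_in => z zr; split; first exact: Pj_per.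
split; first exact: Pj_harm.
move=> g'; rewrite inE => /orP[/eqP ->|g'gs].
  by exists z; apply: Pj_eig.
have [la ela] := eF g' g'gs; exists la; exact: Pj_shift.
Qed.

Definition pch (chi : D -> L) := is_char chi /\ forall l, S l -> chi l = 1.

Lemma char_nz (chi : D -> L) : is_char chi -> forall x, chi x != 0.
Proof.
move=> [c0 cM] x; apply/eqP => e; have := cM x (-x).
by rewrite subrr c0 e mul0r => /eqP; rewrite oner_eq0.
Qed.

Lemma charN (chi : D -> L) x : is_char chi -> chi (- x) = (chi x)^-1.
Proof.
move=> hc; have [c0 cM] := hc; apply: (mulfI (char_nz hc x)).
by rewrite -cM subrr c0 divff ?char_nz.
Qed.

Lemma pch_per chi : pch chi -> per chi.
Proof. by move=> [[c0 cM] c1] x l Sl; rewrite cM (c1 l Sl) mulr1. Qed.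

Lemma chi_mn (chi : D -> L) x n : is_char chi -> chi (x *+ n) = chi x ^+ n.
Proof.
move=> [c0 cM]; elim: n => [|n IH]; first by rewrite mulr0n c0 expr0.
by rewrite mulrS cM IH exprS.
Qed.

Lemma pch_root chi x : pch chi -> chi x ^+ m = 1.
Proof. move=> [hc c1]; rewrite -chi_mn // c1 //; exact: (mS HS Hs1 Hs2). Qed.

Definition chiQ l (chi : D -> L) := fun y => chi y ^+ (q ^ l)%N.

Lemma pchQ l chi : pch chi -> pch (chiQ l chi).
Proof.
move=> [[c0 cM] c1]; split; first split.
- by rewrite /chiQ c0 expr1n.
- by move=> x y; rewrite /chiQ cM exprMn.
- by move=> l' Sl; rewrite /chiQ c1 // expr1n.
Qed.

Definition delta (psi chi : D -> L) : L :=
  (m%:R)^-1 * \sum_(j < m) (psi (s j))^-1 * chi (s j).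
Definition E (psi h : D -> L) (x : D) : L :=
  (m%:R)^-1 * \sum_(j < m) (psi (s j))^-1 * h (x + s j).

Lemma E_char (psi chi : D -> L) x : is_char chi -> E psi chi x = delta psi chi * chi x.
Proof.
move=> [c0 cM]; rewrite /E /delta -mulrA mulr_suml; congr (_ * _).
by apply: eq_bigr => j _; rewrite cM mulrCA mulrC.
Qed.

Lemma E_lin psi (B : seq (L * (D -> L))) h x :
  (forall y, h y = \sum_(b <- B) b.1 * b.2 y) ->
  E psi h x = \sum_(b <- B) b.1 * E psi b.2 x.
Proof.
move=> eh; rewrite /E.
under eq_bigr do rewrite eh mulr_sumr.
rewrite exchange_big /= mulr_sumr; apply: eq_bigr => b _.
rewrite mulrCA; congr (_ * _); rewrite mulr_sumr; apply: eq_bigr => j _.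
by rewrite mulrCA.
Qed.

Lemma delta_self (chi : D -> L) : is_char chi -> delta chi chi = 1.
Proof.
move=> hc; rewrite /delta.
under eq_bigr do rewrite mulVf ?char_nz //.
by rewrite sumr_const card_ord mulVf ?mL.
Qed.

Lemma ortho psi chi : pch psi -> pch chi -> delta psi chi = 0 \/ (forall x, psi x = chi x).
Proof.
move=> hpsi hchi; have [[p0 pM] p1] := hpsi; have [[c0 cM] c1] := hchi.
pose rho y := chi y / psi y.
case: (classic (forall g, rho g = 1)) => [all1|].
  right => x; have := all1 x; rewrite /rho => e.
  by rewrite -[chi x](divfK (char_nz hpsi.1 x)) e mul1r.
move=> /not_all_ex_not [g rg]; left.
have per_rho : forall x l, S l -> rho (x + l) = rho x.
  by move=> x l Sl; rewrite /rho (pch_per hpsi) // (pch_per hchi).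
have key : \sum_(j < m) rho (s j) * rho g = \sum_(j < m) rho (s j).
  rewrite -(sum_shift HS Hs1 Hs2 g per_rho); apply: eq_bigr => j _.
  by rewrite /rho cM pM invfM mulrACA.
move: key; rewrite -mulr_suml => /eqP; rewrite -subr_eq0 -{2}(mulr1 (\sum_(j < m) rho (s j))).
rewrite -mulrBr mulf_eq0 subr_eq0 (negbTE (introN eqP rg)) orbF => /eqP e.
by rewrite /delta (eq_bigr (fun j => rho (s j))) ?e ?mulr0 // => j _; rewrite mulrC.
Qed.

Lemma mLq l : ((m%:R)^-1 : L) ^+ (q ^ l)%N = (m%:R)^-1.
Proof.
have e : iota ((m%:R)^-1) = (m%:R)^-1 by rewrite fmorphV rmorph_nat.
by rewrite -e iotaq.
Qed.

Lemma E_frob l psi h x : (forall y, h y ^+ (q ^ l)%N = h y) ->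
  (E psi h x) ^+ (q ^ l)%N = E (chiQ l psi) h x.
Proof.
move=> hf; rewrite /E exprMn. rewrite mLq. rewrite (frob_sum Hp iota). congr (_ * _).
by apply: eq_bigr => j _; rewrite /chiQ exprMn exprVn hf.
Qed.


Lemma delta_ext (psi psi' chi : D -> L) : (forall x, psi x = psi' x) -> delta psi chi = delta psi' chi.
Proof. by move=> e; rewrite /delta; congr (_ * _); apply: eq_bigr => j _; rewrite e. Qed.

Lemma E_ext (psi psi' h : D -> L) x : (forall x, psi x = psi' x) -> E psi h x = E psi' h x.
Proof. by move=> e; rewrite /E; congr (_ * _); apply: eq_bigr => j _; rewrite e. Qed.

Lemma rdeg_ex chi : pch chi -> exists r, is_rdeg q chi r.
Proof.
move=> hchi.
have pr := pcharf_prime Hp.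
have cq : coprime q m.
  apply: (pnat_coprime (qpnat Hp)); rewrite p'natE // -prime_coprime //.
  by rewrite coprime_sym.
have hM : forall x, in_GF q (totient m) (chi x).
  move=> x; rewrite /in_GF -(expr_mod _ (pch_root x hchi)) (Euler_exp_totient cq).
  by rewrite expr_mod ?pch_root // expr1.
have tm : (0 < totient m)%N by rewrite totient_gt0.
have [r [[r0 Pr] Pmin]] := @ex_min (fun r => (0 < r)%N /\ forall x, in_GF q r (chi x))
  (ex_intro _ (totient m) (conj tm hM)).
exists r; split => //; split => // m' m'0 hm'; exact: Pmin.
Qed.

Lemma orbit_ne chi r l : pch chi -> is_rdeg q chi r -> (0 < l)%N -> (l < r)%N ->
  delta (chiQ l chi) chi = 0.
Proof.
move=> hchi [r0 [Pr rmin]] l0 lr.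
case: (ortho (pchQ l hchi) hchi) => // e; exfalso.
have : (r <= l)%N by apply: rmin => // x; rewrite /in_GF; apply/eqP; exact: e x.
by rewrite leqNgt lr.
Qed.

Lemma delta_orbit chi r (a : nat -> L) : pch chi -> is_rdeg q chi r ->
  \sum_(i < r) a i * delta (chiQ i chi) chi = a 0%N.
Proof.
move=> hchi hr; have [r0 _] := hr.
case: r r0 hr => // r _ hr; rewrite big_ord_recl big1 ?addr0.
  rewrite (@delta_ext _ chi) ?delta_self ?mulr1 //; first exact: hchi.1.
by move=> i _; rewrite (orbit_ne hchi hr) ?mulr0 //= /bump /= add1n ltnS.
Qed.

Definition Hpred (chi : D -> L) := (forall l, S l -> chi l = 1) /\ harm chi.
Definition Wsp (h : D -> L) := Kspan iota (trace_translates q Hpred) h.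

Lemma qpow1 (y : L) : y ^+ q = y ^+ (q ^ 1)%N.
Proof. by rewrite expn1. Qed.

Lemma u_fix chi r c : pch chi -> is_rdeg q chi r -> c ^+ (q ^ r)%N = c ->
  forall x, (trace_fun q r (fun y => c * chi y) x) ^+ q = trace_fun q r (fun y => c * chi y) x.
Proof.
move=> hchi [r0 [Pr _]] cr x; rewrite /trace_fun qpow1 (frob_sum Hp iota).
under eq_bigr do rewrite -exprM -expnD addn1.
apply: (@cyc_sum L r (fun i => (c * chi x) ^+ (q ^ i)%N)).
by rewrite exprMn cr (eqP (Pr x)) expn0 expr1.
Qed.

Lemma u_W chi r c : pch chi -> harm chi -> is_rdeg q chi r -> c ^+ (q ^ r)%N = c ->
  Wsp (trace_fun q r (fun y => c * chi y)).
Proof.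
move=> hchi hh hr cr.
set u := trace_fun q r (fun y => c * chi y).
have uf := u_fix hchi hr cr.
pose a j := (m%:R)^-1 * u (- s j).
have af : forall j, a j ^+ q = a j.
  by move=> j; rewrite /a exprMn qpow1 mLq -qpow1 uf.
pose kf j := proj1_sig (constructive_indefinite_description _ (fixed_iota iota (af j))).
have kfP : forall j, iota (kf j) = a j :=
  fun j => proj2_sig (constructive_indefinite_description _ (fixed_iota iota (af j))).
have afl : forall j l, a j ^+ (q ^ l)%N = a j by move=> j l; rewrite -kfP iotaq.
have key : \sum_(j < m) a j * chi (s j) = c.
  transitivity (\sum_(i < r) c ^+ (q ^ i)%N * delta (chiQ i chi) chi); last first.
    by rewrite (@delta_orbit chi r (fun i => c ^+ (q ^ i)%N)) // expn0 expr1.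
  rewrite /a /u /trace_fun /delta.
  under eq_bigr do rewrite -mulrA mulr_suml mulr_sumr.
  rewrite exchange_big; apply: eq_bigr => i _.
  rewrite mulr_sumr mulr_sumr; apply: eq_bigr => j _.
  rewrite (charN _ hchi.1) exprMn exprVn -/(chiQ i chi (s j)).
  by rewrite -!mulrA mulrCA.
exists m, kf, (fun j x => trace_fun q r chi (x + s j)); split.
  move=> j; exists chi, r, (s j); split; first exact: hchi.1.
  split; first by split; [exact: hchi.2|exact: hh].
  by split.
move=> x.
have e1 : u x = \sum_(i < r) (\sum_(j < m) a j * chi (s j) * chi x) ^+ (q ^ i)%N.
  by rewrite -mulr_suml key.
rewrite e1; under eq_bigr do rewrite (frob_sum Hp iota).
rewrite exchange_big; apply: eq_bigr => j _; rewrite kfP /trace_fun mulr_sumr.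
apply: eq_bigr => i _; rewrite exprMn [(a j * _) ^+ _]exprMn.
rewrite afl hchi.1.2 exprMn -mulrA; congr (_ * _).
by rewrite mulrC.
Qed.

Lemma big_Pall (T : Type) (R : zmodType) (Q : T -> Prop) (F G : T -> R) (B : seq T) :
  Pall Q B -> (forall b, Q b -> F b = G b) -> \sum_(b <- B) F b = \sum_(b <- B) G b.
Proof.
move=> + e; elim: B => [|b B IH] /=; first by rewrite !big_nil.
by move=> [qb qB]; rewrite !big_cons e // IH.
Qed.

Definition goodb (b : L * (D -> L)) := b.1 = 0 \/ (pch b.2 /\ harm b.2).

Lemma E_on_list psi (B : seq (L * (D -> L))) x : pch psi -> Pall goodb B ->
  \sum_(b <- B) b.1 * E psi b.2 x = (\sum_(b <- B) b.1 * delta psi b.2) * psi x.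
Proof.
move=> hpsi aB; rewrite mulr_suml; apply: (big_Pall aB) => -[b1 b2]; rewrite /goodb /= => -[-> | [h2 _]].
  by rewrite !mul0r.
rewrite E_char; last exact: h2.1.
case: (ortho hpsi h2) => [-> | e]; first by rewrite mul0r !mulr0 mul0r.
by rewrite -e mulrA.
Qed.

Lemma peel_n n : forall (B : seq (L * (D -> L))) (h : D -> L), size B = n ->
  (forall x, h x = \sum_(b <- B) b.1 * b.2 x) -> (forall x, h x ^+ q = h x) ->
  Pall goodb B -> Wsp h.
Proof.
elim: n => [|n IHn] [|[be chi] B] h //= sB eh hf.
  by move=> _; apply: Kspan0 => x; rewrite eh big_nil.
move: sB => [sB].
have IH := IHn B.
move=> [hb aB].
have hfl : forall l x, h x ^+ (q ^ l)%N = h x.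
  elim=> [|l IHl] x; first by rewrite expn0 expr1.
  by rewrite expnSr exprM IHl hf.
case: hb => /= [be0 | [hchi hh]].
  by apply: IH => // x; rewrite eh big_cons /= be0 mul0r add0r.
have [r hr] := rdeg_ex hchi.
have [r0 [Pr rmin]] := hr.
set B0 := (be, chi) :: B.
have aB0 : Pall goodb B0 by split => //; right.
set c := \sum_(b <- B0) b.1 * delta chi b.2.
have Ec : forall x, E chi h x = c * chi x.
  by move=> x; rewrite (E_lin chi x eh) E_on_list.
have cfix : c ^+ (q ^ r)%N = c.
  have e0 : E chi h 0 = c by rewrite Ec hchi.1.1 mulr1.
  rewrite -e0 E_frob // (@E_ext _ chi) // => y; exact: (eqP (Pr y)).
set u := trace_fun q r (fun y => c * chi y).
have Wu := u_W hchi hh hr cfix.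
have uf := u_fix hchi hr cfix.
have Eu : forall x, \sum_(i < r) E (chiQ i chi) h x = u x.
  move=> x; rewrite /u /trace_fun; apply: eq_bigr => i _.
  by rewrite -E_frob // Ec.
pose ga (b : L * (D -> L)) := 1 - \sum_(i < r) delta (chiQ i chi) b.2.
have gchi : ga (be, chi) = 0.
  rewrite /ga /= (eq_bigr (fun i : 'I_r => 1 * delta (chiQ i chi) chi)); last by move=> i _; rewrite mul1r.
  by rewrite (@delta_orbit chi r (fun _ => 1)) // subrr.
have eh' : forall x, h x - u x = \sum_(b <- B) (b.1 * ga b) * b.2 x.
  move=> x; rewrite -Eu.
  under eq_bigr do rewrite (E_lin _ x eh).
  rewrite exchange_big /= eh -sumrB.
  rewrite (big_Pall (G := fun b => (b.1 * ga b) * b.2 x) aB0); last first.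
    move=> -[b1 b2]; rewrite /goodb /= => -[-> | [h2 _]]; first by rewrite !mul0r big1 ?subr0 // => i _; rewrite mul0r.
    under eq_bigr => i _ do rewrite (E_char (chiQ i chi) x h2.1) mulrA.
    by rewrite -mulr_suml -mulr_sumr /ga /= mulrBr mulr1 mulrBl.
  by rewrite big_cons /= gchi mulr0 mul0r add0r.
have W' : Wsp (fun x => h x - u x).
  apply: (IHn (map (fun b => (b.1 * ga b, b.2)) B)).
  - by rewrite size_map.
  - by move=> x; rewrite eh' big_map.
  - by move=> x; rewrite qpow1 (frobB Hp iota) -!qpow1 hf uf.
  - apply: (Pall_map _ aB) => -[b1 b2]; rewrite /goodb /= => -[-> | hb2]; first by left; rewrite mul0r.
    by right.
apply: (Kspan_ext _ (Kspan_add W' Wu)) => x /=.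
by rewrite subrK.
Qed.

Lemma peel (B : seq (L * (D -> L))) (h : D -> L) :
  (forall x, h x = \sum_(b <- B) b.1 * b.2 x) -> (forall x, h x ^+ q = h x) ->
  Pall goodb B -> Wsp h.
Proof. exact: (@peel_n (size B) B h). Qed.

Lemma gen_fwd (h : D -> L) : per h -> harm h -> (forall x, h x ^+ q = h x) -> Wsp h.
Proof.
move=> ph hh hf.
have [Fs [eFs aFs]] := decomp (map s (enum 'I_m)) ph hh.
have eall : forall F, good (map s (enum 'I_m)) F -> forall g, eig F g.
  move=> F [pF [hF eF]] g; have [i Si] := Hs1 g.
  have [la ela] := eF (s i) (map_f _ (mem_enum _ i)).
  exists la => x0; rewrite -{1}(subrK (s i) g) addrA ela pF //.
apply: (@peel (map (fun F => (F 0, fun x => F x / F 0)) Fs)) => //.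
  move=> x; rewrite eFs big_map; apply: (big_Pall aFs) => F gF /=.
  case: (eqVneq (F 0) 0) => F0; last by rewrite mulrC divfK.
  have [la ela] := eall F gF x.
  by rewrite F0 mul0r -[x]add0r ela F0 mulr0.
apply: (Pall_map _ aFs) => F gF; rewrite /goodb /=.
have [pF [hF _]] := gF.
case: (eqVneq (F 0) 0) => F0; first by left.
right; split; first split; first split.
- by rewrite divff.
- move=> x y /=; have [la ela] := eall F gF y.
  have e2 : F y = la * F 0 by rewrite -[y]add0r ela.
  by rewrite ela e2 mulfK // [RHS]mulrC mulrA.
- by move=> l Sl /=; rewrite -[l]add0r pF // divff.
- move=> j x; rewrite /cv.
  under eq_bigr do rewrite mulrAC.
  by rewrite -mulr_suml -/(cv F (A j) x) hF mul0r.
Qed.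

Lemma gen_bwd (f : D -> K) : Wsp (fun x => iota (f x)) ->
  forall j x, cv (fun x => iota (f x)) (A j) x = 0.
Proof.
move=> [N [c [v [Pv ev]]]] j x; rewrite /cv.
under eq_bigr do rewrite ev mulr_suml.
rewrite exchange_big /= big1 // => i _.
have [chi [r [g [hc [[hp hh] [hr ev']]]]]] := Pv i.
under eq_bigr do rewrite -mulrA ev' /trace_fun mulr_suml.
rewrite -mulr_sumr exchange_big /= big1 ?mulr0 // => l _.
transitivity ((cv chi (A j) (x + g)) ^+ (q ^ l)%N); last by rewrite hh; exact: frob0.
rewrite /cv (frob_sum Hp iota); apply: eq_bigr => kc _.
by rewrite exprMn iotaq addrAC.
Qed.
End Main.

Lemma Kspan_mono (X : Type) (K : fieldType) (L : fieldType) (iota : K -> L) (P1 P2 : (X -> L) -> Prop) (h : X -> L) :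
  (forall v, P1 v -> P2 v) -> Kspan iota P1 h -> Kspan iota P2 h.
Proof. by move=> H [N [c [v [Pv ev]]]]; exists N, c, v; split => // i; apply: H. Qed.

Lemma tt_mono (D : zmodType) (L : fieldType) (q : nat) (H1 H2 : (D -> L) -> Prop) (v : D -> L) :
  (forall chi, is_char chi -> H1 chi -> H2 chi) ->
  trace_translates q H1 v -> trace_translates q H2 v.
Proof.
move=> H [chi [r [g [hc [h1 [hr ev]]]]]]; exists chi, r, g; split => //; split => //.
exact: H.
Qed.

Lemma GEN (K : finFieldType) (p : nat) (Hp : p \in [pchar K]) (L : closedFieldType)
  (iota : {rmorphism K -> L})
  (D : zmodType) (S : D -> Prop) (HS : is_subgroup S) (m : nat) (s : 'I_m -> D)
  (Hs1 : forall x, exists i, S (x - s i)) (Hs2 : forall i j, S (s i - s j) -> i = j)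
  (Hmp : coprime m p)
  (t : nat) (A : 'I_t -> seq (D * K)) (f : D -> K) (Hf : forall x l, S l -> f (x + l) = f x) :
  (forall j x, cv iota (fun y => iota (f y)) (A j) x = 0) <->
  Kspan iota (trace_translates #|K| (fun chi => (forall l, S l -> chi l = 1) /\
      forall j x, cv iota chi (A j) x = 0)) (fun x => iota (f x)).
Proof.
have [rs [U Sz Hr]] := roots_exist (m_gt0 Hs1) (mL Hp iota Hmp).
split => [H|]; last exact: (gen_bwd Hp).
apply: (gen_fwd Hp HS Hs1 Hs2 Hmp U Sz Hr).
- by move=> x l Sl /=; rewrite Hf.
- exact: H.
- by move=> x; rewrite -rmorphXn expf_card.
Qed.

Lemma convG_re (G : finZmodType) (R : nzRingType) (f a : G -> R) x :
  convG f a x = \sum_(k <- enum G) f (x - k) * a k.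
Proof.
rewrite /convG big_enum /= (reindex_inj (subrI x)) /=.
by apply: eq_bigr => k _; rewrite subKr.
Qed.

Unset Implicit Arguments.
Set Strict Implicit.

Theorem theorem4p4
  (K : finFieldType) (p : nat) (Hp : p \in [pchar K])
  (L : closedFieldType) (iota : {rmorphism K -> L}) (Halg : integralRange iota) :
  (* (a) *)
  (forall (G : finZmodType) (HG : coprime #|G| p)
          (t : nat) (a : 'I_t -> G -> K) (f : G -> K),
     (forall j x, convG f (a j) x = 0) <->
     Kspan iota
       (trace_translates #|K|
          (fun chi => forall j x, convG chi (iota \o a j) x = 0))
       (iota \o f))
  /\
  (* (b) *)
  (forall (n : nat) (S : 'rV[int]_n -> Prop) (HS : is_subgroup S)
          (m : nat) (Hm : has_index S m) (Hmp : coprime m p)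
          (t : nat) (a : 'I_t -> {fsfun 'rV[int]_n -> K with 0})
          (f : 'rV[int]_n -> K)
          (Hf : forall x l, S l -> f (x + l) = f x),
     (forall j x, convF id f (a j) x = 0) <->
     Kspan iota
       (trace_translates #|K|
          (fun chi => (forall l, S l -> chi l = 1) /\
                      forall j x, convF iota chi (a j) x = 0))
       (iota \o f)).
Proof.
split.
- move=> G HG t a f.
  pose S := fun x : G => x = 0.
  have HS : is_subgroup S by split => //; rewrite /S => x y -> ->; rewrite subr0.
  pose s := fun i : 'I_#|G| => enum_val i.
  have Hs1 : forall x, exists i, S (x - s i).
    by move=> x; exists (enum_rank x); rewrite /S /s enum_rankK subrr.
  have Hs2 : forall i j, S (s i - s j) -> i = j.
    by move=> i j; rewrite /S /s => /eqP; rewrite subr_eq0 => /eqP /enum_val_inj.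
  pose A := fun j => [seq (k, a j k) | k <- enum G].
  have cvA : forall (chi : G -> L) j x,
      cv iota chi (A j) x = convG chi (iota \o a j) x.
    by move=> chi j x; rewrite convG_re /cv big_map.
  have Hf : forall x l, S l -> f (x + l) = f x by move=> x l; rewrite /S => ->; rewrite addr0.
  have [H1 H2] := @GEN K p Hp L iota G S HS #|G| s Hs1 Hs2 HG t A f Hf.
  split.
  + move=> H.
    have H' : forall j x, cv iota (fun y => iota (f y)) (A j) x = 0.
      move=> j x; rewrite cvA /= convG_re.
      rewrite (eq_bigr (fun k => iota (f (x - k) * a j k))); last by move=> k _; rewrite rmorphM.
      by rewrite -rmorph_sum -convG_re H rmorph0.
    apply: (Kspan_mono _ (H1 H')) => v; apply: tt_mono => chi hc [_ hh] j x.
    by rewrite -cvA.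
  + move=> H j x; apply/eqP; rewrite -(fmorph_eq0 iota); apply/eqP.
    have HW : Kspan iota (trace_translates #|K| (fun chi => (forall l, S l -> chi l = 1) /\
        forall j x, cv iota chi (A j) x = 0)) (fun x => iota (f x)).
      apply: (Kspan_mono _ H) => v; apply: tt_mono => chi hc hh.
      split; first by move=> l ->; exact: hc.1.
      by move=> j' x'; rewrite cvA.
    have := H2 HW j x.
    rewrite cvA /= convG_re => <-.
    rewrite convG_re rmorph_sum; apply: eq_bigr => k _; by rewrite rmorphM.
- move=> n S HS m [s [Hs1 Hs2]] Hmp t a f Hf.
  pose A := fun j => [seq (k, a j k) | k <- finsupp (a j)].
  have cvA : forall (chi : 'rV[int]_n -> L) j x,
      cv iota chi (A j) x = convF iota chi (a j) x.
    by move=> chi j x; rewrite /cv big_map.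
  have cvf : forall j x, cv iota (fun y => iota (f y)) (A j) x = iota (convF id f (a j) x).
    move=> j x; rewrite cvA /convF rmorph_sum; apply: eq_bigr => k _.
    by rewrite rmorphM.
  have [H1 H2] := @GEN K p Hp L iota _ S HS m s Hs1 Hs2 Hmp t A f Hf.
  split.
  + move=> H.
    have H' : forall j x, cv iota (fun y => iota (f y)) (A j) x = 0.
      by move=> j x; rewrite cvf H rmorph0.
    apply: (Kspan_mono _ (H1 H')) => v; apply: tt_mono => chi hc [hp hh].
    by split => // j x; rewrite -cvA.
  + move=> H j x; apply/eqP; rewrite -(fmorph_eq0 iota); apply/eqP.
    have HW : Kspan iota (trace_translates #|K| (fun chi => (forall l, S l -> chi l = 1) /\
        forall j x, cv iota chi (A j) x = 0)) (fun x => iota (f x)).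
      apply: (Kspan_mono _ H) => v; apply: tt_mono => chi hc [hp hh].
      by split => // j' x'; rewrite cvA.
    by rewrite -cvf; apply: H2.
Qed.
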